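(* For a (nondegenerate) triangle $AB\Gamma$, let $\ell_1$ be the line perpendicular to $AB$ through $B$, $\ell_2$ the line perpendicular to $B\Gamma$ through $\Gamma$, and $\ell_3$ the line perpendicular to $\Gamma A$ through $A$, and let $A'B'\Gamma'$ be the triangle bounded by these three lines. Let $E$ and $E'$ be the areas of $AB\Gamma$ and $A'B'\Gamma'$. Then, over all such pairs in which the triangles are right triangles, the minimum value of $E'/E$ is $4$, attained exactly when the triangles are isosceles right triangles. *)

(* Defs.v *)
From HB Require Import structures.
From mathcomp Require Import all_boot all_order all_algebra.
Set Implicit Arguments. Unset Strict Implicit. Unset Printing Implicit Defensive.
Import Order.TTheory GRing.Theory Num.Theory.
Local Open Scope ring_scope.

Section Geom.
Variable R : realFieldType.
Definition pt := (R * R)%type.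

Definition vsub (p q : pt) : pt := (p.1 - q.1, p.2 - q.2).
Definition dot (u v : pt) : R := u.1 * v.1 + u.2 * v.2.
Definition cross (u v : pt) : R := u.1 * v.2 - u.2 * v.1.

Definition area (A B C : pt) : R := `|cross (vsub B A) (vsub C A)| / 2.

Definition nondeg_triangle (A B C : pt) : Prop := cross (vsub B A) (vsub C A) != 0.

Definition on_perp_at (P Q X : pt) : Prop := dot (vsub X Q) (vsub Q P) = 0.

Definition right_at (V P Q : pt) : Prop := dot (vsub P V) (vsub Q V) = 0.

Definition right_triangle (A B C : pt) : Prop :=
  right_at A B C \/ right_at B C A \/ right_at C A B.

Definition isosceles_right_at (V P Q : pt) : Prop :=
  right_at V P Q /\ dot (vsub P V) (vsub P V) = dot (vsub Q V) (vsub Q V).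

Definition isosceles_right_triangle (A B C : pt) : Prop :=
  isosceles_right_at A B C \/ isosceles_right_at B C A \/ isosceles_right_at C A B.

(* P = l1 ∩ l2, Q = l2 ∩ l3, S = l3 ∩ l1
   are the vertices of the triangle bounded by l1, l2, l3. *)
Definition l1 (A B C X : pt) : Prop := on_perp_at A B X.
Definition l2 (A B C X : pt) : Prop := on_perp_at B C X.
Definition l3 (A B C X : pt) : Prop := on_perp_at C A X.

Definition perp_triangle (A B C P Q S : pt) : Prop :=
  [/\ l1 A B C P /\ l2 A B C P,
      l2 A B C Q /\ l3 A B C Q &
      l3 A B C S /\ l1 A B C S].
End Geom.

(* Main.v *)
Require Import Defs.
From mathcomp Require Import all_boot all_order all_algebra.
From mathcomp Require Import ring lra.
Import Order.TTheory GRing.Theory Num.Theory.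
Local Open Scope ring_scope.

Set Implicit Arguments.
Section Aux.
Variable R : realFieldType.

Lemma solve2 (x y q1 q2 n11 n12 r1 r2 n21 n22 : R) :
  (x - q1) * n11 + (y - q2) * n12 = 0 ->
  (x - r1) * n21 + (y - r2) * n22 = 0 ->
  n11 * n22 - n12 * n21 != 0 ->
  x = ((q1*n11+q2*n12)*n22 - (r1*n21+r2*n22)*n12) / (n11 * n22 - n12 * n21) /\
  y = (n11*(r1*n21+r2*n22) - n21*(q1*n11+q2*n12)) / (n11 * n22 - n12 * n21).
Proof.
move=> H1 H2 nz; split; apply: (mulIf nz); rewrite mulfVK //;
  apply/eqP; rewrite -subr_eq0; apply/eqP.
- transitivity (n22 * ((x - q1)*n11 + (y - q2)*n12) - n12 * ((x - r1)*n21 + (y - r2)*n22)); first ring.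
  by rewrite H1 H2; ring.
- transitivity (n11 * ((x - r1)*n21 + (y - r2)*n22) - n21 * ((x - q1)*n11 + (y - q2)*n12)); first ring.
  by rewrite H1 H2; ring.
Qed.

Arguments solve2 {x y q1 q2 n11 n12 r1 r2 n21 n22}.
Definition sumsq (A B C : pt R) : R :=
  dot (vsub B A) (vsub B A) + dot (vsub C B) (vsub C B) + dot (vsub A C) (vsub A C).
Definition Dt (A B C : pt R) : R := cross (vsub B A) (vsub C A).
Definition ratioF (A B C : pt R) : R := sumsq A B C ^+ 2 / (4 * Dt A B C ^+ 2).

Lemma key (A B C P Q S : pt R) : nondeg_triangle A B C -> perp_triangle A B C P Q S ->
  area P Q S / area A B C = ratioF A B C.
Proof.
case: A => a1 a2; case: B => b1 b2; case: C => c1 c2.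
case: P => p1 p2; case: Q => q1 q2; case: S => s1 s2.
rewrite /nondeg_triangle /perp_triangle /l1 /l2 /l3 /on_perp_at /dot /vsub /cross /=.
move=> nz [[HP1 HP2] [HQ1 HQ2] [HS1 HS2]].
have nz1 : (b1 - a1) * (c2 - b2) - (b2 - a2) * (c1 - b1) != 0.
  by have -> : (b1 - a1) * (c2 - b2) - (b2 - a2) * (c1 - b1) = (b1 - a1) * (c2 - a2) - (b2 - a2) * (c1 - a1) by ring.
have nz2 : (c1 - b1) * (a2 - c2) - (c2 - b2) * (a1 - c1) != 0.
  by have -> : (c1 - b1) * (a2 - c2) - (c2 - b2) * (a1 - c1) = (b1 - a1) * (c2 - a2) - (b2 - a2) * (c1 - a1) by ring.
have nz3 : (a1 - c1) * (b2 - a2) - (a2 - c2) * (b1 - a1) != 0.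
  by have -> : (a1 - c1) * (b2 - a2) - (a2 - c2) * (b1 - a1) = (b1 - a1) * (c2 - a2) - (b2 - a2) * (c1 - a1) by ring.
have [E1 E2] := solve2 HP1 HP2 nz1.
have [E3 E4] := solve2 HQ1 HQ2 nz2.
have [E5 E6] := solve2 HS1 HS2 nz3.
set D := (b1 - a1) * (c2 - a2) - (b2 - a2) * (c1 - a1).
set s := (b1 - a1) * (b1 - a1) + (b2 - a2) * (b2 - a2) + ((c1 - b1) * (c1 - b1) + (c2 - b2) * (c2 - b2)) +
   ((a1 - c1) * (a1 - c1) + (a2 - c2) * (a2 - c2)).
have X : (q1 - p1) * (s2 - p2) - (q2 - p2) * (s1 - p1) = s ^+ 2 / (4 * D).
  rewrite E1 E2 E3 E4 E5 E6 /s /D.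
  field.
  exact: nz.
rewrite /area /ratioF /sumsq /Dt /dot /cross /vsub /= -/D -/s X.
have nD : `|D| != 0 by rewrite normr_eq0.
have -> : D ^+ 2 = `|D| ^+ 2 by rewrite -normrX ger0_norm // sqr_ge0.
rewrite normf_div (ger0_norm (sqr_ge0 s)) normrM (@ger0_norm _ 4) //.
by field.
Qed.

Lemma ratio_rot (A B C : pt R) : ratioF A B C = ratioF B C A.
Proof.
case: A => a1 a2; case: B => b1 b2; case: C => c1 c2.
rewrite /ratioF /sumsq /Dt /dot /cross /vsub /=; congr (_ / (4 * _ ^+ 2)); ring.
Qed.

Lemma nondeg_rot (A B C : pt R) : nondeg_triangle A B C -> nondeg_triangle B C A.
Proof.
case: A => a1 a2; case: B => b1 b2; case: C => c1 c2.
rewrite /nondeg_triangle /dot /cross /vsub /=.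
by have -> : (c1 - b1) * (a2 - b2) - (c2 - b2) * (a1 - b1) = (b1 - a1) * (c2 - a2) - (b2 - a2) * (c1 - a1) by ring.
Qed.

Lemma right_main (V P Q : pt R) : nondeg_triangle V P Q -> right_at V P Q ->
  4 <= ratioF V P Q /\ (ratioF V P Q = 4 <-> isosceles_right_at V P Q).
Proof.
move=> nd rt.
rewrite /isosceles_right_at.
set p := dot (vsub P V) (vsub P V); set q := dot (vsub Q V) (vsub Q V).
have Es : sumsq V P Q = 2 * (p + q) - 2 * dot (vsub P V) (vsub Q V).
  rewrite /sumsq /p /q; case: V {nd rt p q} => v1 v2; case: P => p1 p2; case: Q => q1 q2.
  rewrite /dot /vsub /=; ring.
have ED : Dt V P Q ^+ 2 = p * q - dot (vsub P V) (vsub Q V) ^+ 2.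
  rewrite /Dt /p /q; case: V {nd rt p q Es} => v1 v2; case: P => p1 p2; case: Q => q1 q2.
  rewrite /dot /cross /vsub /=; ring.
move: (rt); rewrite /right_at => r0.
rewrite r0 mulr0 subr0 in Es; rewrite r0 expr0n /= subr0 in ED.
have pq0 : 0 < p * q.
  by rewrite -ED lt_def sqrf_eq0 nd sqr_ge0.
have E : ratioF V P Q = (2 * (p + q)) ^+ 2 / (4 * (p * q)) by rewrite /ratioF Es ED.
have pq4 : 0 < 4 * (p * q) by rewrite mulr_gt0.
rewrite E; split.
  rewrite ler_pdivlMr //.
  have := sqr_ge0 (p - q); nra.
split=> [H|[_ H]].
  split => //.
  have H' : (2 * (p + q)) ^+ 2 = 4 * (4 * (p * q)) by rewrite -[LHS](mulfVK (lt0r_neq0 pq4)) H.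
  have : (p - q) ^+ 2 = 0.
    transitivity (((2 * (p + q)) ^+ 2 - 4 * (4 * (p * q))) / 4); first by field.
    by rewrite H' subrr mul0r.
  by move/eqP; rewrite sqrf_eq0 subr_eq0 => /eqP.
rewrite -/p -/q in H; rewrite H in pq0 *.
have q0 : q != 0 by apply: contraTneq pq0 => ->; rewrite mulr0 ltxx.
by field.
Qed.

Lemma iso_at (V P Q : pt R) : nondeg_triangle V P Q -> isosceles_right_at V P Q ->
  ratioF V P Q = 4.
Proof. by move=> nd h; have [_ ->] := right_main nd h.1. Qed.

Lemma right_any (A B C : pt R) : nondeg_triangle A B C -> right_triangle A B C ->
  4 <= ratioF A B C /\ (ratioF A B C = 4 <-> isosceles_right_triangle A B C).
Proof.
move=> nd rt.
have nd2 := nondeg_rot nd; have nd3 := nondeg_rot nd2.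
have e2 : ratioF A B C = ratioF B C A by apply: ratio_rot.
have e3 : ratioF A B C = ratioF C A B by rewrite e2; apply: ratio_rot.
have H : ratioF A B C = 4 -> isosceles_right_triangle A B C.
  case: rt => [r|[r|r]] h.
  - by left; apply/(right_main nd r).2.
  - by right; left; apply/(right_main nd2 r).2; rewrite -e2.
  - by right; right; apply/(right_main nd3 r).2; rewrite -e3.
split.
  case: rt => [r|[r|r]].
  - exact: (right_main nd r).1.
  - by rewrite e2; exact: (right_main nd2 r).1.
  - by rewrite e3; exact: (right_main nd3 r).1.
split => // -[h|[h|h]].
- exact: iso_at.
- by rewrite e2; apply: iso_at.
- by rewrite e3; apply: iso_at.
Qed.
End Aux.

Theorem mainTheorem3 (R : realFieldType) :
  (forall A B C P Q S : pt R,
      nondeg_triangle A B C -> right_triangle A B C -> perp_triangle A B C P Q S ->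
      4 <= area P Q S / area A B C)
  /\
  (forall A B C P Q S : pt R,
      nondeg_triangle A B C -> right_triangle A B C -> perp_triangle A B C P Q S ->
      (area P Q S / area A B C = 4 <-> isosceles_right_triangle A B C))
  /\
  (exists A B C P Q S : pt R,
      [/\ nondeg_triangle A B C, right_triangle A B C, perp_triangle A B C P Q S &
          area P Q S / area A B C = 4]).
Proof.
split.
  by move=> A B C P Q S nd rt pt; rewrite key //; apply: (right_any nd rt).1.
split.
  by move=> A B C P Q S nd rt pt; rewrite key //; apply: (right_any nd rt).2.
have nd : nondeg_triangle ((0:R), (0:R)) (1, 0) (0, 1).
  by rewrite /nondeg_triangle /cross /vsub /= !subr0 !mulr0 mulr1 subr0 oner_neq0.
have rt : right_triangle ((0:R), (0:R)) (1, 0) (0, 1).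
  by left; rewrite /right_at /dot /vsub /= !subr0 !mulr0 mul0r addr0.
have pt : perp_triangle ((0:R), (0:R)) (1, 0) (0, 1) (1, 2) (-1, 0) (1, 0).
  by rewrite /perp_triangle /l1 /l2 /l3 /on_perp_at /dot /vsub /=; split; split; ring.
exists (0, 0), (1, 0), (0, 1), (1, 2), (-1, 0), (1, 0); split => //.
rewrite key //; apply/(right_any nd rt).2; left.
by split; rewrite /right_at /dot /vsub /=; ring.
Qed.
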